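(* Let $\mathcal H$ be a Hilbert space, $A$ a bounded, everywhere defined, symmetric operator on $\mathcal H$, and $P$ a self-adjoint operator on $\mathcal H$ such that $PA$ is densely defined. Suppose that the range $R(A)$ is closed, that $N(A)\subset D(P)$, and that $PN(A)\subset N(A)$. Then $AP=(PA)^*$ (and hence $APA$ is self-adjoint).
   Context: $D(X)$, $N(X)$, $R(X)$ denote domain, kernel and range of an operator $X$. $D(PA)=\{x\in\mathcal H: Ax\in D(P)\}$, $D(AP)=D(P)$. *)

(* Defs.v *)
From HB Require Import structures.
From mathcomp Require Import all_boot all_order all_algebra.
From mathcomp Require Import complex.
From mathcomp Require Import all_classical all_reals.
Set Implicit Arguments. Unset Strict Implicit. Unset Printing Implicit Defensive.
Import Order.TTheory GRing.Theory Num.Theory.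
Local Open Scope ring_scope.
Local Open Scope complex_scope.

Section Hilbert.
Variables (R : realType) (H : lmodType R[i]) (ip : H -> H -> R[i]).

Definition is_inner_product : Prop :=
  [/\ (forall x y, ip x y = (ip y x)^*),
      (forall (a : R[i]) x y z, ip (a *: x + y) z = a * ip x z + ip y z),
      (forall x, 0 <= ip x x) &
      (forall x, ip x x = 0 -> x = 0)].

Definition cvg_to (u : nat -> H) (x : H) : Prop :=
  forall eps : R[i], 0 < eps ->
    exists N, forall n, (N <= n)%N -> ip (u n - x) (u n - x) < eps.

Definition cauchy_seq (u : nat -> H) : Prop :=
  forall eps : R[i], 0 < eps ->
    exists N, forall m n, (N <= m)%N -> (N <= n)%N ->
      ip (u m - u n) (u m - u n) < eps.

Definition is_hilbert : Prop :=
  is_inner_product /\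
  (forall u, cauchy_seq u -> exists x, cvg_to u x).

Definition closed_set (S : set H) : Prop :=
  forall u x, (forall n, S (u n)) -> cvg_to u x -> S x.

Definition dense_set (S : set H) : Prop :=
  forall x, exists u, (forall n, S (u n)) /\ cvg_to u x.

Definition linear_map (A : H -> H) : Prop :=
  forall (a : R[i]) x y, A (a *: x + y) = a *: A x + A y.

Definition bounded_map (A : H -> H) : Prop :=
  exists M : R[i], forall x, ip (A x) (A x) <= M * ip x x.

Definition symmetric_map (A : H -> H) : Prop :=
  forall x y, ip (A x) y = ip x (A y).

(* partial (possibly unbounded) operators: a domain and an action on it *)
Record pop := Pop { dom : set H ; app : H -> H }.

Definition graph (T : pop) (x y : H) : Prop := dom T x /\ app T x = y.

Definition linear_pop (T : pop) : Prop :=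
  dom T 0 /\
  forall (a : R[i]) x y, dom T x -> dom T y ->
    dom T (a *: x + y) /\ app T (a *: x + y) = a *: app T x + app T y.

Definition adj_graph (T : pop) (y z : H) : Prop :=
  forall x, dom T x -> ip (app T x) y = ip x z.

(* S = T^*  (same domain and same values) *)
Definition is_adjoint_of (S T : pop) : Prop :=
  forall y z, graph S y z <-> adj_graph T y z.

Definition densely_defined (T : pop) : Prop := dense_set (dom T).

Definition selfadjoint (T : pop) : Prop :=
  linear_pop T /\ densely_defined T /\ is_adjoint_of T T.

Definition comp_PA (P : pop) (A : H -> H) : pop :=
  Pop (fun x => dom P (A x)) (fun x => app P (A x)).
Definition comp_AP (A : H -> H) (P : pop) : pop :=
  Pop (dom P) (fun x => A (app P x)).
Definition comp_APA (A : H -> H) (P : pop) : pop :=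
  Pop (fun x => dom P (A x)) (fun x => A (app P (A x))).

End Hilbert.

(* Main.v *)
Require Import Defs.
From HB Require Import structures.
From mathcomp Require Import all_boot all_order all_algebra.
From mathcomp Require Import complex.
From mathcomp Require Import all_classical all_reals.
From mathcomp Require Import ring lra.
Import Order.TTheory GRing.Theory Num.Theory.
Local Open Scope ring_scope.
Local Open Scope complex_scope.
Notation cRe := complex.Re.
Notation cIm := complex.Im.
Lemma ReD (R : realType) (x y : R[i]) : cRe (x + y) = cRe x + cRe y.
Proof. by case: x => a b; case: y => c d. Qed.
Lemma ReN (R : realType) (x : R[i]) : cRe (- x) = - cRe x.
Proof. by case: x. Qed.
Lemma ReMr (R : realType) (a : R) (x : R[i]) : cRe (a%:C * x) = a * cRe x.
Proof. by case: x => c d /=; rewrite mul0r subr0. Qed.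
Lemma ReJ (R : realType) (x : R[i]) : cRe (x^*) = cRe x.
Proof. by case: x. Qed.


Lemma ip0l {R : realType} {H : lmodType R[i]} {ip : H -> H -> R[i]}
  (hip : is_inner_product ip) z : ip 0 z = 0.
Proof.
case: hip => _ hl _ _.
have := hl 1 0 0 z; rewrite scale1r addr0 mul1r => e.
by apply: (addrI (ip 0 z)); rewrite addr0 -e.
Qed.

Lemma ipDl {R : realType} {H : lmodType R[i]} {ip : H -> H -> R[i]}
  (hip : is_inner_product ip) x y z : ip (x + y) z = ip x z + ip y z.
Proof. case: hip => _ hl _ _; by rewrite -[x]scale1r hl mul1r scale1r. Qed.

Lemma ipZl {R : realType} {H : lmodType R[i]} {ip : H -> H -> R[i]}
  (hip : is_inner_product ip) a x z : ip (a *: x) z = a * ip x z.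
Proof.
have h0 := ip0l hip z.
case: hip => _ hl _ _; by rewrite -[a *: x]addr0 hl h0 addr0.
Qed.

Lemma ipNl {R : realType} {H : lmodType R[i]} {ip : H -> H -> R[i]}
  (hip : is_inner_product ip) x z : ip (- x) z = - ip x z.
Proof. by rewrite -scaleN1r (ipZl hip) mulN1r. Qed.

Lemma ipC {R : realType} {H : lmodType R[i]} {ip : H -> H -> R[i]}
  (hip : is_inner_product ip) x y : ip x y = (ip y x)^*.
Proof. by case: hip. Qed.

Lemma ipDr {R : realType} {H : lmodType R[i]} {ip : H -> H -> R[i]}
  (hip : is_inner_product ip) x y z : ip x (y + z) = ip x y + ip x z.
Proof. by rewrite [ip x y](ipC hip) [ip x z](ipC hip) (ipC hip) (ipDl hip) rmorphD. Qed.

Lemma ipZr {R : realType} {H : lmodType R[i]} {ip : H -> H -> R[i]}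
  (hip : is_inner_product ip) a x y : ip x (a *: y) = a^* * ip x y.
Proof. by rewrite [ip x y](ipC hip) (ipC hip) (ipZl hip) rmorphM. Qed.

Lemma ipNr {R : realType} {H : lmodType R[i]} {ip : H -> H -> R[i]}
  (hip : is_inner_product ip) x z : ip x (- z) = - ip x z.
Proof. by rewrite [ip x z](ipC hip) (ipC hip) (ipNl hip) rmorphN. Qed.

Lemma ip0r {R : realType} {H : lmodType R[i]} {ip : H -> H -> R[i]}
  (hip : is_inner_product ip) z : ip z 0 = 0.
Proof. by rewrite (ipC hip) (ip0l hip) rmorph0. Qed.

Definition n2 {R : realType} {H : lmodType R[i]} (ip : H -> H -> R[i]) x :=
  cRe (ip x x).
Definition re {R : realType} {H : lmodType R[i]} (ip : H -> H -> R[i]) x y :=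
  cRe (ip x y).

Lemma ipxx {R : realType} {H : lmodType R[i]} {ip : H -> H -> R[i]}
  (hip : is_inner_product ip) x : ip x x = (n2 ip x)%:C.
Proof.
case: hip => _ _ hge _; have := ger0_Im (hge x); rewrite /n2.
by case: (ip x x) => a b /= ->.
Qed.

Lemma n2_ge0 {R : realType} {H : lmodType R[i]} {ip : H -> H -> R[i]}
  (hip : is_inner_product ip) x : 0 <= n2 ip x.
Proof.
have := ipxx hip x; case: hip => _ _ hge _; have := hge x.
by move=> + e; rewrite e ler0c.
Qed.

Lemma n2_eq0 {R : realType} {H : lmodType R[i]} {ip : H -> H -> R[i]}
  (hip : is_inner_product ip) x : n2 ip x = 0 -> x = 0.
Proof.
have := ipxx hip x; case: hip => _ _ _ h e0 e; apply: h; by rewrite e0 e.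
Qed.

Lemma re_sym {R : realType} {H : lmodType R[i]} {ip : H -> H -> R[i]}
  (hip : is_inner_product ip) x y : re ip x y = re ip y x.
Proof. by rewrite /re (ipC hip) ReJ. Qed.

Lemma reDl {R : realType} {H : lmodType R[i]} {ip : H -> H -> R[i]}
  (hip : is_inner_product ip) x y z : re ip (x + y) z = re ip x z + re ip y z.
Proof. by rewrite /re (ipDl hip) ReD. Qed.
Lemma reDr {R : realType} {H : lmodType R[i]} {ip : H -> H -> R[i]}
  (hip : is_inner_product ip) x y z : re ip x (y + z) = re ip x y + re ip x z.
Proof. by rewrite /re (ipDr hip) ReD. Qed.
Lemma reNl {R : realType} {H : lmodType R[i]} {ip : H -> H -> R[i]}
  (hip : is_inner_product ip) x z : re ip (- x) z = - re ip x z.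
Proof. by rewrite /re (ipNl hip) ReN. Qed.
Lemma reNr {R : realType} {H : lmodType R[i]} {ip : H -> H -> R[i]}
  (hip : is_inner_product ip) x z : re ip x (- z) = - re ip x z.
Proof. by rewrite /re (ipNr hip) ReN. Qed.
Lemma reZl {R : realType} {H : lmodType R[i]} {ip : H -> H -> R[i]}
  (hip : is_inner_product ip) (t : R) x z : re ip (t%:C *: x) z = t * re ip x z.
Proof. by rewrite /re (ipZl hip) ReMr. Qed.
Lemma reZr {R : realType} {H : lmodType R[i]} {ip : H -> H -> R[i]}
  (hip : is_inner_product ip) (t : R) x z : re ip x (t%:C *: z) = t * re ip x z.
Proof. by rewrite /re (ipZr hip); case: (ip x z) => a b /=; rewrite oppr0 mul0r subr0. Qed.
Lemma re_n2 {R : realType} {H : lmodType R[i]} (ip : H -> H -> R[i]) x :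
  re ip x x = n2 ip x.
Proof. by []. Qed.

Lemma n2D {R : realType} {H : lmodType R[i]} {ip : H -> H -> R[i]}
  (hip : is_inner_product ip) x y :
  n2 ip (x + y) = n2 ip x + 2 * re ip x y + n2 ip y.
Proof.
rewrite -!re_n2 (reDl hip) !(reDr hip) (re_sym hip y x); ring.
Qed.

Lemma n2B {R : realType} {H : lmodType R[i]} {ip : H -> H -> R[i]}
  (hip : is_inner_product ip) x y :
  n2 ip (x - y) = n2 ip x - 2 * re ip x y + n2 ip y.
Proof.
rewrite (n2D hip) (reNr hip) -!re_n2 (reNl hip) (reNr hip); ring.
Qed.

Lemma n2Z {R : realType} {H : lmodType R[i]} {ip : H -> H -> R[i]}
  (hip : is_inner_product ip) (t : R) x :
  n2 ip (t%:C *: x) = t * t * n2 ip x.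
Proof. by rewrite -!re_n2 (reZl hip) (reZr hip) mulrA. Qed.

Lemma A0 {R : realType} {H : lmodType R[i]} {A : H -> H} (hA : linear_map A) :
  A 0 = 0.
Proof.
have := hA 1 0 0; rewrite scale1r addr0 scale1r => e.
by apply: (addrI (A 0)); rewrite addr0 -e.
Qed.
Lemma AD {R : realType} {H : lmodType R[i]} {A : H -> H} (hA : linear_map A) x y :
  A (x + y) = A x + A y.
Proof. by rewrite -[x]scale1r hA !scale1r. Qed.
Lemma AZ {R : realType} {H : lmodType R[i]} {A : H -> H} (hA : linear_map A) a x :
  A (a *: x) = a *: A x.
Proof. by rewrite -[a *: x]addr0 hA (A0 hA) addr0. Qed.
Lemma AN {R : realType} {H : lmodType R[i]} {A : H -> H} (hA : linear_map A) x :
  A (- x) = - A x.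
Proof. by rewrite -scaleN1r (AZ hA) scaleN1r. Qed.
Lemma AB {R : realType} {H : lmodType R[i]} {A : H -> H} (hA : linear_map A) x y :
  A (x - y) = A x - A y.
Proof. by rewrite (AD hA) (AN hA). Qed.

Lemma my_cvgP {R : realType} {H : lmodType R[i]} {ip : H -> H -> R[i]}
  (hip : is_inner_product ip) u x : Defs.cvg_to ip u x ->
  forall e : R, 0 < e -> exists N, forall n, (N <= n)%N -> n2 ip (u n - x) < e.
Proof.
move=> h e e0; have [|N hN] := h e%:C; first by rewrite ltcR.
by exists N => n /hN; rewrite (ipxx hip) ltcR.
Qed.

Lemma cauchyI {R : realType} {H : lmodType R[i]} {ip : H -> H -> R[i]}
  (hip : is_inner_product ip) u :
  (forall e : R, 0 < e -> exists N, forall m n, (N <= m)%N -> (N <= n)%N ->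
     n2 ip (u m - u n) < e) -> Defs.cauchy_seq ip u.
Proof.
move=> h eps; rewrite ltcE => /andP[/eqP hI hR].
have [N hN] := h _ hR; exists N => m n hm hn.
rewrite (ipxx hip) ltcE /=; apply/andP; split; [by apply/eqP; rewrite hI | exact: hN]. Qed.

Lemma inv_small {R : realType} (e : R) : 0 < e ->
  exists N, forall m, (N <= m)%N -> (m.+1%:R : R)^-1 < e.
Proof.
move=> e0; exists (Num.Def.trunc (e^-1)) => m hm.
rewrite invf_plt ?posrE ?ltr0Sn //.
apply: (lt_le_trans (truncnS_gt _)); by rewrite ler_nat ltnS.
Qed.

Lemma n2D_le {R : realType} {H : lmodType R[i]} {ip : H -> H -> R[i]}
  (hip : is_inner_product ip) (s : R) a b : 0 < s ->
  s * n2 ip (a + b) <= s * (1 + s) * n2 ip a + (s + 1) * n2 ip b.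
Proof.
move=> s0; have h := n2_ge0 hip (s%:C *: a - b).
rewrite (n2B hip) (n2Z hip) (reZl hip) in h.
rewrite (n2D hip); nra.
Qed.

Lemma par_law {R : realType} {H : lmodType R[i]} {ip : H -> H -> R[i]}
  (hip : is_inner_product ip) a b :
  n2 ip (b - a) = 2 * n2 ip a + 2 * n2 ip b - n2 ip (a + b).
Proof. rewrite (n2B hip) (n2D hip) (re_sym hip b a); ring. Qed.

Lemma n2_double {R : realType} {H : lmodType R[i]} {ip : H -> H -> R[i]}
  (hip : is_inner_product ip) v : n2 ip (v + v) = 4 * n2 ip v.
Proof. rewrite (n2D hip) re_n2; ring. Qed.


Lemma proj_range {R : realType} {H : lmodType R[i]} {ip : H -> H -> R[i]}
  (hH : is_hilbert ip) {A : H -> H} (hA : linear_map A)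
  (hRA : closed_set ip (range A)) y :
  exists q, forall w, re ip (y - A q) (A w) = 0.
Proof.
have hip := hH.1.
pose Sx := (fun r : R => exists x, r = n2 ip (y - A x)) : set R.
have hlb : has_lbound Sx by exists 0 => r [x ->]; exact: n2_ge0.
have hinf : has_inf Sx by split => //; exists (n2 ip (y - A 0)); exists 0.
pose d := inf Sx.
have dle : forall x, d <= n2 ip (y - A x) by move=> x; apply: ge_inf => //; exists x.
have d0 : 0 <= d.
  apply: lb_le_inf; first by exists (n2 ip (y - A 0)); exists 0.
  by move=> r [x ->]; exact: n2_ge0.
have : forall n : nat, exists x, n2 ip (y - A x) < d + (n.+1%:R)^-1.
  move=> n; have hn : 0 < (n.+1%:R : R)^-1 by rewrite invr_gt0 ltr0Sn.
  have [r [x ->] hr] := inf_adherent hn hinf.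
  by exists x.
move=> /choice [xs hxs].
have par : forall m n, n2 ip (A (xs m) - A (xs n)) <=
    2 * (m.+1%:R)^-1 + 2 * (n.+1%:R)^-1.
  move=> m n.
  pose a := y - A (xs m); pose b := y - A (xs n).
  pose c := (2^-1 : R[i]) *: (xs m + xs n).
  have e1 : A (xs m) - A (xs n) = b - a.
    by rewrite /a /b [RHS]addrC opprB addrA subrK.
  have h2 : (2^-1 : R[i]) + 2^-1 = 1 by rewrite [RHS]splitr mul1r.
  have e2 : a + b = (y - A c) + (y - A c).
    rewrite /a /b [LHS]addrACA [RHS]addrACA -opprD -opprD; congr (_ + - _).
    by rewrite /c (AZ hA) (AD hA) -scalerDl h2 scale1r.
  have ha : n2 ip a < d + (m.+1%:R)^-1 := hxs m.
  have hb : n2 ip b < d + (n.+1%:R)^-1 := hxs n.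
  have hc := dle c.
  have ep : n2 ip (b - a) = 2 * n2 ip a + 2 * n2 ip b - n2 ip (a + b).
    exact: par_law.
  have e4 : n2 ip (a + b) = 4 * n2 ip (y - A c).
    by rewrite e2 (n2_double hip).
  rewrite e1 ep e4; clearbody a b; move: ha hb hc.
  set im := (m.+1%:R : R)^-1; set iN := (n.+1%:R : R)^-1; lra.
have hc : cauchy_seq ip (fun n => A (xs n)).
  apply: (cauchyI hip) => e e0.
  have e4 : 0 < e / 4 by rewrite divr_gt0.
  have [N hN] := inv_small _ e4.
  exists N => m n hm hn.
  have := par m n; have := hN _ hm; have := hN _ hn.
  set im := (m.+1%:R : R)^-1; set iN := (n.+1%:R : R)^-1; lra.
have [p hp] := hH.2 _ hc.
have : range A p by apply: (hRA _ _ _ hp) => n; exists (xs n).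
case=> q _ hq; subst p.
have hle : n2 ip (y - A q) <= d.
  apply/ler_addgt0Pr => e e0.
  clearbody d.
  pose s := e / (3 * (d + 1)).
  have s0 : 0 < s by apply: divr_gt0 => //; apply: mulr_gt0 => //; lra.
  pose dl := e / (3 * (1 + s)).
  pose et := s * e / (3 * (s + 1)).
  have dl0 : 0 < dl by apply: divr_gt0 => //; apply: mulr_gt0 => //; lra.
  have et0 : 0 < et by apply: divr_gt0; [exact: mulr_gt0 | apply: mulr_gt0 => //; lra].
  have [N1 hN1] := inv_small _ dl0.
  have [N2 hN2] := my_cvgP hip _ _ hp _ et0.
  pose n := maxn N1 N2.
  have ha : n2 ip (y - A (xs n)) < d + dl.
    apply: (lt_trans (hxs n)); rewrite ltrD2l; apply: hN1; exact: leq_maxl.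
  have hb : n2 ip (A (xs n) - A q) < et by apply: hN2; exact: leq_maxr.
  have key := n2D_le hip _ (y - A (xs n)) (A (xs n) - A q) s0.
  rewrite addrA subrK in key.
  have hs1 : s * (d + 1) = e / 3.
    rewrite /s; field; rewrite gt_eqF //; lra.
  have hsd : s * d <= e / 3 by nra.
  have hdl : (1 + s) * dl = e / 3.
    rewrite /dl; field; rewrite gt_eqF //; lra.
  have het : (s + 1) * et = s * (e / 3).
    rewrite /et; field; rewrite gt_eqF //; lra.
  have na0 := n2_ge0 hip (y - A (xs n)).
  have nb0 := n2_ge0 hip (A (xs n) - A q).
  have t1 : s * (1 + s) * n2 ip (y - A (xs n)) <= s * (1 + s) * (d + dl).
    have p1 : 0 < s * (1 + s) by apply: mulr_gt0 => //; lra.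
    by rewrite ler_pM2l // ltW.
  have t2 : (s + 1) * n2 ip (A (xs n) - A q) <= (s + 1) * et.
    have p2 : 0 < s + 1 by lra.
    by rewrite ler_pM2l // ltW.
  have t3 : s * n2 ip (y - A q) <= s * (d + e).
    have eq1 : s * (1 + s) * (d + dl) = s * d + s * (s * d) + s * ((1 + s) * dl) by ring.
    rewrite eq1 hdl in t1; rewrite het in t2.
    have : s * (s * d) <= s * (e / 3) by rewrite ler_pM2l.
    lra.
  by rewrite ler_pM2l in t3.
exists q => w.
pose c := re ip (y - A q) (A w); pose K := n2 ip (A w).
have K0 : 0 <= K by exact: n2_ge0.
have ht : forall t : R, 0 <= - 2 * t * c + t * t * K.
  move=> t; have := dle (q + t%:C *: w).
  rewrite (AD hA) (AZ hA) opprD addrA (n2B hip) (n2Z hip) (reZr hip).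
  rewrite -/c -/K; lra.
pose t := c / (K + 1).
have K1 : 0 < K + 1 by lra.
have ec : c = t * (K + 1) by rewrite /t divfK // gt_eqF.
have h := ht t; rewrite ec in h.
have : t * t * (K + 2) <= 0 by nra.
move=> h2.
have tt0 : t * t <= 0.
  have K2 : 0 < K + 2 by lra.
  by rewrite -(ler_pM2r K2) mul0r.
have : t * t = 0 by apply/le_anti; rewrite tt0 /= -expr2 sqr_ge0.
by move/eqP; rewrite mulf_eq0 orbb => /eqP t0; change (c = 0); rewrite ec t0 mul0r.
Qed.


Lemma decomp {R : realType} {H : lmodType R[i]} {ip : H -> H -> R[i]}
  (hH : is_hilbert ip) {A : H -> H} (hA : linear_map A)
  (hsym : symmetric_map ip A)
  (hRA : closed_set ip (range A)) y : exists q, A (y - A q) = 0.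
Proof.
have hip := hH.1; have [q hq] := proj_range hH hA hRA y; exists q.
apply: (n2_eq0 hip); have := hq (A (y - A q)).
by rewrite /re /n2 -hsym.
Qed.

Lemma orthl {R : realType} {H : lmodType R[i]} {ip : H -> H -> R[i]}
  (hip : is_inner_product ip) {A : H -> H} (hsym : symmetric_map ip A) n x :
  A n = 0 -> ip n (A x) = 0.
Proof. by move=> h; rewrite -hsym h (ip0l hip). Qed.

Lemma orthr {R : realType} {H : lmodType R[i]} {ip : H -> H -> R[i]}
  (hip : is_inner_product ip) {A : H -> H} (hsym : symmetric_map ip A) n x :
  A n = 0 -> ip (A x) n = 0.
Proof. by move=> h; rewrite hsym h (ip0r hip). Qed.

Lemma Psym {R : realType} {H : lmodType R[i]} {ip : H -> H -> R[i]} {P : pop H}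
  (hP : selfadjoint ip P) u y : dom P u -> dom P y ->
  ip (app P u) y = ip u (app P y).
Proof.
case: hP => _ [_ adj] du dy.
by apply: ((adj y (app P y)).1 (conj dy erefl)).
Qed.

Lemma P0 {R : realType} {H : lmodType R[i]} {ip : H -> H -> R[i]} {P : pop H}
  (hP : selfadjoint ip P) : dom P 0 /\ app P 0 = 0.
Proof.
case: hP => [[d0 lin] _]; split => //.
have [_ ] := lin 1 0 0 d0 d0; rewrite scale1r addr0 scale1r => e.
by apply: (addrI (app P 0)); rewrite addr0 -e.
Qed.

Lemma PD {R : realType} {H : lmodType R[i]} {ip : H -> H -> R[i]} {P : pop H}
  (hP : selfadjoint ip P) u v : dom P u -> dom P v ->
  dom P (u + v) /\ app P (u + v) = app P u + app P v.
Proof.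
case: hP => [[d0 lin] _] du dv.
by have := lin 1 u v du dv; rewrite !scale1r.
Qed.

Lemma PB {R : realType} {H : lmodType R[i]} {ip : H -> H -> R[i]} {P : pop H}
  (hP : selfadjoint ip P) u v : dom P u -> dom P v ->
  dom P (v - u) /\ app P (v - u) = app P v - app P u.
Proof.
case: hP => [[d0 lin] _] du dv.
by have := lin (-1) u v du dv; rewrite !scaleN1r addrC [_ + app P v]addrC.
Qed.

Lemma part1 {R : realType} {H : lmodType R[i]} {ip : H -> H -> R[i]}
  (hH : is_hilbert ip)
  (A : H -> H) (P : pop H)
  (hA : linear_map A) (hsym : symmetric_map ip A)
  (hP : selfadjoint ip P)
  (hRA : closed_set ip (range A))
  (hNA : forall x, A x = 0 -> dom P x)
  (hPN : forall x, A x = 0 -> A (app P x) = 0) :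
  is_adjoint_of ip (comp_AP A P) (comp_PA P A).
Proof.
have hip := hH.1.
move=> y z; split.
  case=> /= dy <- x dAx /=.
  by rewrite (Psym hP _ _ dAx dy) hsym.
move=> /= hadj.
have [d0 P00] := P0 hP.
have [q hq] := decomp hH hA hsym hRA y.
set y0 := y - A q in hq.
have dy0 : dom P y0 := hNA _ hq.
have ey : y = y0 + A q by rewrite /y0 subrK.
have [r hr] := decomp hH hA hsym hRA z.
set z0 := z - A r in hr.
have hz0 : z0 = 0.
  case: (hip) => _ _ _ h4; apply: h4.
  have := hadj z0; rewrite /= hr P00 (ip0l hip) => /(_ d0) h.
  have ez : z = z0 + A r by rewrite /z0 subrK.
  by rewrite ez (ipDr hip) (orthl hip hsym _ _ hr) addr0 in h.
have ez : z = A r by rewrite -(subrK (A r) z) -/z0 hz0 add0r.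
have [s hs] := decomp hH hA hsym hRA r.
have ez' : z = A (A s).
  by rewrite ez -(subrK (A s) r) (AD hA) hs add0r.
pose w := app P y0 + A s.
have hw : adj_graph ip P y w.
  move=> v dv.
  have [c hc] := decomp hH hA hsym hRA v.
  set v0 := v - A c in hc.
  have dv0 : dom P v0 := hNA _ hc.
  have eAc : v - v0 = A c by rewrite /v0 opprB addrC subrK.
  have [dAc ePAc] := PB hP _ _ dv0 dv; rewrite eAc in dAc ePAc.
  have ev : app P v = app P v0 + app P (A c) by rewrite ePAc addrC subrK.
  have vv : v = v0 + A c by rewrite /v0 subrK.
  rewrite ev (ipDl hip) {1}ey (ipDr hip) (orthl hip hsym _ _ (hPN _ hc)) addr0.
  rewrite (Psym hP _ _ dv0 dy0) (hadj c dAc) ez' -hsym.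
  rewrite /w {1}vv (ipDl hip) !(ipDr hip) (orthl hip hsym _ _ hc) addr0.
  by rewrite (orthr hip hsym _ _ (hPN _ hq)) add0r.
have [dy ePy] := (hP.2.2 y w).2 hw.
split => //=.
by rewrite ePy /w (AD hA) (hPN _ hq) add0r ez'.
Qed.

Theorem theorem7 (R : realType) (H : lmodType R[i]) (ip : H -> H -> R[i])
  (hH : is_hilbert ip)
  (A : H -> H) (P : pop H)
  (hA_lin : linear_map A) (hA_bdd : bounded_map ip A)
  (hA_sym : symmetric_map ip A)
  (hP : selfadjoint ip P)
  (hPA : densely_defined ip (comp_PA P A))
  (hRA : closed_set ip (range A))
  (hNA : forall x, A x = 0 -> dom P x)
  (hPN : forall x, A x = 0 -> A (app P x) = 0) :
  is_adjoint_of ip (comp_AP A P) (comp_PA P A) /\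
  selfadjoint ip (comp_APA A P).
Proof.
have p1 := part1 hH A P hA_lin hA_sym hP hRA hNA hPN.
split => //.
have [d0 P00] := P0 hP.
split.
  split; first by rewrite /= (A0 hA_lin).
  move=> a x y /= dx dy.
  have [_ lin] := hP.1.
  rewrite hA_lin; have [d e] := lin a _ _ dx dy.
  by split => //; rewrite e hA_lin.
split; first exact: hPA.
move=> y z; split.
  case=> /= dAy <- x dAx /=.
  by rewrite hA_sym (Psym hP _ _ dAx dAy) hA_sym.
move=> /= h.
apply: (p1 (A y) z).2 => x dx /=.
by rewrite -hA_sym; exact: h x dx.
Qed.
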